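(* Let $X$ be a setoid. Define $\mathsf{join}:\mathfrak{S}(\mathfrak{S}X)\to\mathfrak{S}X$ by $\mathsf{join}\ \hat f := f$ and $$\mathsf{join}(\mathsf{glue}\ o\ F\ G) := \mathsf{glue}\ o\ \big(\mathsf{join}(\mathsf{map}\,(\lambda x.\,\mathsf{SplitL}\ x\ o)\,F)\big)\ \big(\mathsf{join}(\mathsf{map}\,(\lambda x.\,\mathsf{SplitR}\ x\ o)\,G)\big).$$ Then $(\mathfrak{S}, \mathsf{const}, \mathsf{map}, \mathsf{join})$ is a monad up to $\asymp$: $\mathsf{join}$ and $\mathsf{map}\,\varphi$ (for respectful $\varphi$) respect $\asymp$, and for all $f\in\mathfrak{S}X$ and $H\in\mathfrak{S}(\mathfrak{S}(\mathfrak{S}X))$: $\mathsf{join}(\hat f)\asymp f$, $\mathsf{join}(\mathsf{map}\ \mathsf{const}\ f)\asymp f$, and $\mathsf{join}(\mathsf{join}\ H)\asymp\mathsf{join}(\mathsf{map}\ \mathsf{join}\ H)$.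
   Context: Step functions. For a type $X$, $\mathfrak{S}X$ is the inductive type of (formal, rational) step functions on $[0,1]$: it has the constructors $\mathsf{const}\ x$ for $x\in X$ (also written $\hat x$), and $\mathsf{glue}\ o\ f\ g$ for $o\in(0,1)\cap\mathbb{Q}$ and $f,g\in\mathfrak{S}X$. Split. For $a\in(0,1)\cap\mathbb{Q}$: $\mathsf{SplitL}\ \hat x\ a := \hat x$, $\mathsf{SplitR}\ \hat x\ a:=\hat x$, and $\mathsf{SplitL}(\mathsf{glue}\ o\ f_l\ f_r)\ a :=$ $\mathsf{SplitL}\ f_l\ (a/o)$ if $a<o$; $f_l$ if $a=o$; $\mathsf{glue}\ (o/a)\ f_l\ (\mathsf{SplitL}\ f_r\ \tfrac{a-o}{1-o})$ if $a>o$. $\mathsf{SplitR}(\mathsf{glue}\ o\ f_l\ f_r)\ a :=$ $\mathsf{glue}\ \tfrac{o-a}{1-a}\ (\mathsf{SplitR}\ f_l\ (a/o))\ f_r$ if $a<o$; $f_r$ if $a=o$; $\mathsf{SplitR}\ f_r\ \tfrac{a-o}{1-o}$ if $a>o$. Map and ap. $\mathsf{map}\ \varphi\ \hat x := \widehat{\varphi x}$, $\mathsf{map}\ \varphi\ (\mathsf{glue}\ o\ f\ g):=\mathsf{glue}\ o\ (\mathsf{map}\ \varphi\ f)(\mathsf{map}\ \varphi\ g)$. For $F\in\mathfrak{S}(X\Rightarrow Y)$, $x\in\mathfrak{S}X$: $\hat\varphi @ x := \mathsf{map}\ \varphi\ x$, and $(\mathsf{glue}\ o\ F_l\ F_r)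 @ x := \mathsf{glue}\ o\ (F_l @ \mathsf{SplitL}\ x\ o)\ (F_r @ \mathsf{SplitR}\ x\ o)$. Write $f\{\circledast\}g := (\lambda u v. u\circledast v)\circ f @ g$ where $\varphi\circ x:=\mathsf{map}\ \varphi\ x$. Fold. $\mathsf{fold}\ \varphi\ \psi\ \hat x:=\varphi x$, $\mathsf{fold}\ \varphi\ \psi\ (\mathsf{glue}\ o\ f\ g) := \psi\ o\ (\mathsf{fold}\ \varphi\ \psi\ f)(\mathsf{fold}\ \varphi\ \psi\ g)$. $\mathsf{fold}_\star$ is $\mathsf{fold}\ \mathrm{id}\ (\lambda o\,p\,q.\ p\wedge q)$. Equivalence. For a setoid $X$ and $f,g\in\mathfrak{S}X$, $f\asymp_{\mathfrak{S}X} g := \mathsf{fold}_\star(f\{\asymp_X\}g)$; $\mathfrak{S}X$ is itself a setoid with this relation, so $\mathfrak{S}(\mathfrak{S}X)$ etc. carry the iterated relation. *)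

(* Defs.v *)
From HB Require Import structures.
From mathcomp Require Import all_boot all_order all_algebra.
From Stdlib Require Import RelationClasses.
Set Implicit Arguments. Unset Strict Implicit. Unset Printing Implicit Defensive.
Import Order.TTheory GRing.Theory Num.Theory.
Local Open Scope ring_scope.

Definition Q01 := {q : rat | (0 < q) && (q < 1)}.

Lemma half01_proof : (0 < 1/2 :> rat) && (1/2 < 1 :> rat).
Proof. by []. Qed.

Definition half01 : Q01 := exist _ (1/2) half01_proof.

(* Smart constructor: q itself when q lies in (0,1); only ever used on
   values that do lie in (0,1). *)
Definition mkQ01 (q : rat) : Q01 := insubd half01 q.

(* Step functions on [0,1]. *)
Inductive Step (X : Type) : Type :=
| const : X -> Step X
| glue : Q01 -> Step X -> Step X -> Step X.
Arguments const {X} x.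
Arguments glue {X} o f g.

Fixpoint SplitL (X : Type) (f : Step X) (a : Q01) : Step X :=
  match f with
  | const x => const x
  | glue o fl fr =>
      let a' := val a in let o' := val o in
      if a' < o' then SplitL fl (mkQ01 (a' / o'))
      else if a' == o' then fl
      else glue (mkQ01 (o' / a')) fl (SplitL fr (mkQ01 ((a' - o') / (1 - o'))))
  end.

Fixpoint SplitR (X : Type) (f : Step X) (a : Q01) : Step X :=
  match f with
  | const x => const x
  | glue o fl fr =>
      let a' := val a in let o' := val o in
      if a' < o' then glue (mkQ01 ((o' - a') / (1 - a'))) (SplitR fl (mkQ01 (a' / o'))) fr
      else if a' == o' then fr
      else SplitR fr (mkQ01 ((a' - o') / (1 - o')))
  end.

Fixpoint smap (X Y : Type) (phi : X -> Y) (f : Step X) : Step Y :=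
  match f with
  | const x => const (phi x)
  | glue o f g => glue o (smap phi f) (smap phi g)
  end.

Fixpoint sap (X Y : Type) (F : Step (X -> Y)) (x : Step X) : Step Y :=
  match F with
  | const phi => smap phi x
  | glue o Fl Fr => glue o (sap Fl (SplitL x o)) (sap Fr (SplitR x o))
  end.

Fixpoint sfold (X Y : Type) (phi : X -> Y) (psi : Q01 -> Y -> Y -> Y)
  (f : Step X) : Y :=
  match f with
  | const x => phi x
  | glue o f g => psi o (sfold phi psi f) (sfold phi psi g)
  end.

Definition fold_star (f : Step Prop) : Prop :=
  sfold id (fun _ p q => p /\ q) f.

Definition slift2 (X Y Z : Type) (op : X -> Y -> Z) (f : Step X) (g : Step Y)
  : Step Z := sap (smap (fun u v => op u v) f) g.

Definition seqv (X : Type) (R : X -> X -> Prop) (f g : Step X) : Prop :=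
  fold_star (slift2 R f g).

(* join, defined by an auxiliary structural recursion; the defining
   equations of the paper are proved below as [join_const], [join_glue]. *)
Fixpoint joinAux (X Y : Type) (F : Step Y) (k : Y -> Step X) : Step X :=
  match F with
  | const f => k f
  | glue o F G => glue o (joinAux F (fun x => SplitL (k x) o))
                         (joinAux G (fun x => SplitR (k x) o))
  end.

Definition join (X : Type) (F : Step (Step X)) : Step X := joinAux F id.

Lemma joinAux_map (X Y Z : Type) (h : Z -> Y) (F : Step Z) (k : Y -> Step X) :
  joinAux (smap h F) k = joinAux F (fun z => k (h z)).
Proof.
elim: F k => [z|o F IHF G IHG] k //=.
by rewrite IHF IHG.
Qed.

Lemma join_const (X : Type) (f : Step X) : join (const f) = f.
Proof. by []. Qed.

Lemma join_glue (X : Type) (o : Q01) (F G : Step (Step X)) :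
  join (glue o F G) =
  glue o (join (smap (fun x => SplitL x o) F)) (join (smap (fun x => SplitR x o) G)).
Proof. by rewrite /join /= !joinAux_map. Qed.

(* Main.v *)
Require Import Defs.
From mathcomp Require Import all_boot all_order all_algebra.
From Stdlib Require Import RelationClasses.
Set Implicit Arguments. Unset Strict Implicit. Unset Printing Implicit Defensive.
Import Order.TTheory GRing.Theory Num.Theory.
Local Open Scope ring_scope.

Lemma valQ (q : Q01) : 0 < val q /\ val q < 1.
Proof. by case: q => q /= /andP. Qed.

Lemma mkQ01K (q : rat) : 0 < q -> q < 1 -> val (mkQ01 q) = q.
Proof. by move=> h1 h2; rewrite /mkQ01 insubdK //; apply/andP. Qed.

Lemma frac01 (p q : rat) : 0 < p -> p < q -> 0 < p / q /\ p / q < 1.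
Proof.
move=> hp hpq; have hq : 0 < q by apply: lt_trans hpq.
by split; [apply: divr_gt0 | rewrite ltr_pdivrMr // mul1r].
Qed.

Definition mid (o lo hi : rat) := lo + o * (hi - lo).

Lemma mid_bounds o lo hi : 0 < o -> o < 1 -> lo < hi -> lo < mid o lo hi /\ mid o lo hi < hi.
Proof.
move=> h0 h1 hl; have hd : 0 < hi - lo by rewrite subr_gt0.
split; first by rewrite /mid ltrDl mulr_gt0.
by rewrite /mid -ltrBrDl gtr_pMl.
Qed.

Lemma scale_cancel (p q d : rat) : q != 0 -> (p / q) * (q * d) = p * d.
Proof. by move=> hq; rewrite mulrA divfK. Qed.

Lemma sub_mid o lo H : H - mid o lo H = (1 - o) * (H - lo).
Proof. by rewrite /mid mulrBl mul1r opprD addrA. Qed.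

Lemma mid_sub o lo H : mid o lo H - lo = o * (H - lo).
Proof. by rewrite /mid addrAC subrr add0r. Qed.

Lemma add_split (lo x y d : rat) : lo + x * d + (y - x) * d = lo + y * d.
Proof. by rewrite -addrA -mulrDl addrCA subrr addr0. Qed.

Fixpoint evI (X : Type) (f : Step X) (lo hi t : rat) : X :=
  match f with
  | const x => x
  | glue o f g => if t < mid (val o) lo hi then evI f lo (mid (val o) lo hi) t
                  else evI g (mid (val o) lo hi) hi t
  end.

Lemma evSplitL (X : Type) (f : Step X) (a : Q01) lo H hi t :
  lo < H -> hi = lo + val a * (H - lo) -> lo <= t -> t < hi ->
  evI (SplitL f a) lo hi t = evI f lo H t.
Proof.
elim: f a lo H hi t => [x|o fl IHl fr IHr] a lo H hi t //= hlH ehi hlt hth.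
have [a0 a1] := valQ a; have [o0 o1] := valQ o.
have hd : 0 < H - lo by rewrite subr_gt0.
have [hm1 hm2] := mid_bounds o0 o1 hlH.
case: ltgtP => hao.
- have [q0 q1] := frac01 a0 hao.
  have hhm : hi < mid (val o) lo H by rewrite ehi /mid ltrD2l ltr_pM2r.
  rewrite (lt_trans hth hhm).
  apply: IHl => //; rewrite mkQ01K // mid_sub scale_cancel //.
  by rewrite gt_eqF.
- have [q0 q1] := frac01 o0 hao.
  have ehl : hi - lo = val a * (H - lo) by rewrite ehi addrAC subrr add0r.
  have em : mid (val (mkQ01 (val o / val a))) lo hi = mid (val o) lo H.
    by rewrite mkQ01K // /mid ehl scale_cancel // gt_eqF.
  rewrite /= em; case: ifP => // ht.
  have hmt : mid (val o) lo H <= t by rewrite leNgt ht.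
  have [r0 r1] : 0 < val a - val o /\ val a - val o < 1 - val o.
    by rewrite subr_gt0 ltrD2r.
  have [q'0 q'1] := frac01 r0 r1.
  apply: IHr => //; rewrite mkQ01K // sub_mid scale_cancel; last first.
    by rewrite gt_eqF // subr_gt0.
  by rewrite ehi /mid add_split.
- have -> : mid (val o) lo H = hi by rewrite ehi hao.
  by rewrite hth.
Qed.

Lemma evSplitR (X : Type) (f : Step X) (a : Q01) lo H L t :
  lo < H -> L = lo + val a * (H - lo) -> L <= t -> t < H ->
  evI (SplitR f a) L H t = evI f lo H t.
Proof.
elim: f a lo H L t => [x|o fl IHl fr IHr] a lo H L t //= hlH eL hLt htH.
have [a0 a1] := valQ a; have [o0 o1] := valQ o.
have hd : 0 < H - lo by rewrite subr_gt0.
have [hm1 hm2] := mid_bounds o0 o1 hlH.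
case: ltgtP => hao.
- have [q0 q1] := frac01 a0 hao.
  have [r0 r1] : 0 < val o - val a /\ val o - val a < 1 - val a.
    by rewrite subr_gt0 ltrD2r.
  have [q'0 q'1] := frac01 r0 r1.
  have eHL : H - L = (1 - val a) * (H - lo) by rewrite eL -/(mid _ _ _) sub_mid.
  have em : mid (val (mkQ01 ((val o - val a) / (1 - val a)))) L H = mid (val o) lo H.
    rewrite mkQ01K // /mid eHL scale_cancel; last by rewrite gt_eqF // subr_gt0.
    by rewrite eL add_split.
  rewrite /= em; case: ifP => // ht.
  have hLm : L < mid (val o) lo H by rewrite eL /mid ltrD2l ltr_pM2r.
  apply: IHl => //; rewrite mkQ01K // mid_sub scale_cancel //.
  by rewrite gt_eqF.
- have [r0 r1] : 0 < val a - val o /\ val a - val o < 1 - val o.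
    by rewrite subr_gt0 ltrD2r.
  have [q'0 q'1] := frac01 r0 r1.
  have hmL : mid (val o) lo H < L by rewrite eL /mid ltrD2l ltr_pM2r.
  have -> : (t < mid (val o) lo H) = false.
    by apply/negbTE; rewrite -leNgt; apply: le_trans hLt; apply: ltW.
  apply: IHr => //; rewrite mkQ01K // sub_mid scale_cancel; last first.
    by rewrite gt_eqF // subr_gt0.
  by rewrite eL /mid add_split.
- have -> : mid (val o) lo H = L by rewrite eL hao.
  by rewrite ltNge hLt.
Qed.

Lemma evMap (X Y : Type) (phi : X -> Y) (f : Step X) lo hi t :
  evI (smap phi f) lo hi t = phi (evI f lo hi t).
Proof. by elim: f lo hi => [x|o f IHf g IHg] lo hi //=; case: ifP. Qed.

Lemma evAp (X Y : Type) (F : Step (X -> Y)) (x : Step X) lo hi t :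
  lo < hi -> lo <= t -> t < hi ->
  evI (sap F x) lo hi t = evI F lo hi t (evI x lo hi t).
Proof.
elim: F x lo hi t => [phi|o Fl IHl Fr IHr] x lo hi t hl h1 h2 /=.
  by rewrite evMap.
have [o0 o1] := valQ o; have [hm1 hm2] := mid_bounds o0 o1 hl.
case: ifP => ht.
  by rewrite IHl // (@evSplitL _ x o lo hi).
have hmt : mid (val o) lo hi <= t by rewrite leNgt ht.
by rewrite IHr // (@evSplitR _ x o lo hi).
Qed.

Lemma evFold (P : Step Prop) lo hi : lo < hi ->
  fold_star P <-> (forall t, lo <= t -> t < hi -> evI P lo hi t).
Proof.
elim: P lo hi => [p|o Pl IHl Pr IHr] lo hi hl /=.
  by split=> [//|h]; apply: (h lo).
have [o0 o1] := valQ o; have [hm1 hm2] := mid_bounds o0 o1 hl.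
have E1 := IHl lo (mid (val o) lo hi) hm1.
have E2 := IHr (mid (val o) lo hi) hi hm2.
change (fold_star Pl /\ fold_star Pr <-> (forall t, lo <= t -> t < hi -> evI (glue o Pl Pr) lo hi t)).
rewrite /=.
split=> [[/E1 h1 /E2 h2] t ht1 ht2|h].
  case: ifP => ht; first exact: h1.
  by apply: h2 => //; rewrite leNgt ht.
split; [apply/E1|apply/E2] => t ht1 ht2.
  by have := h t ht1 (lt_trans ht2 hm2); rewrite ht2.
have := h t (le_trans (ltW hm1) ht1) ht2.
by rewrite ltNge ht1.
Qed.

Lemma seqvE (X : Type) (R : X -> X -> Prop) (f g : Step X) :
  seqv R f g <-> (forall t : rat, 0 <= t -> t < 1 -> R (evI f 0 1 t) (evI g 0 1 t)).
Proof.
rewrite /seqv /slift2; have E := evFold (sap (smap (fun u v => R u v) f) g) ltr01.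
split=> [/E h t h1 h2|h]; last (apply/E => t h1 h2);
  have := h t h1 h2; by rewrite evAp ?ltr01 // evMap.
Qed.

Lemma evJoinAux (X Y : Type) (F : Step Y) (k : Y -> Step X) lo hi t :
  lo < hi -> lo <= t -> t < hi ->
  evI (joinAux F k) lo hi t = evI (k (evI F lo hi t)) lo hi t.
Proof.
elim: F k lo hi t => [y|o Fl IHl Fr IHr] k lo hi t hl h1 h2 //=.
have [o0 o1] := valQ o; have [hm1 hm2] := mid_bounds o0 o1 hl.
case: ifP => ht.
  by rewrite IHl // (@evSplitL _ _ o lo hi).
have hmt : mid (val o) lo hi <= t by rewrite leNgt ht.
by rewrite IHr // (@evSplitR _ _ o lo hi).
Qed.

Lemma evJoin (X : Type) (F : Step (Step X)) t : 0 <= t -> t < 1 ->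
  evI (join F) 0 1 t = evI (evI F 0 1 t) 0 1 t.
Proof. by move=> h1 h2; rewrite /join evJoinAux ?ltr01. Qed.

Theorem mainTheorem10 :
  (* join respects the (iterated) equivalence *)
  (forall (X : Type) (R : X -> X -> Prop), Equivalence R ->
     forall F G : Step (Step X),
       seqv (seqv R) F G -> seqv R (join F) (join G)) /\
  (* map phi respects the equivalence, for respectful phi *)
  (forall (X Y : Type) (R : X -> X -> Prop) (S : Y -> Y -> Prop),
     Equivalence R -> Equivalence S ->
     forall phi : X -> Y, (forall x y, R x y -> S (phi x) (phi y)) ->
     forall f g : Step X, seqv R f g -> seqv S (smap phi f) (smap phi g)) /\
  (* monad laws up to the equivalence *)
  (forall (X : Type) (R : X -> X -> Prop), Equivalence R ->
     (forall f : Step X, seqv R (join (const f)) f) /\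
     (forall f : Step X, seqv R (join (smap const f)) f) /\
     (forall H : Step (Step (Step X)),
        seqv R (join (join H)) (join (smap (@join X) H)))).
Proof.
split.
  move=> X R _ F G /seqvE h; apply/seqvE => t h1 h2.
  rewrite !evJoin //; have /seqvE := h t h1 h2; exact.
split.
  move=> X Y R S _ _ phi hphi f g /seqvE h; apply/seqvE => t h1 h2.
  by rewrite !evMap; apply: hphi; apply: h.
move=> X R HR; split; [|split].
- by move=> f; apply/seqvE => t h1 h2; reflexivity.
- move=> f; apply/seqvE => t h1 h2; rewrite evJoin // evMap /=; reflexivity.
- move=> H; apply/seqvE => t h1 h2.
  rewrite !evJoin // evMap evJoin //; reflexivity.
Qed.
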